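(* Let $H$ be a real Hilbert space, $A:H\to c_0$ bounded linear with adjoint $A^*:\ell^1\to H$ (identifying $c_0^*=\ell^1$), with $A$ and $A^*$ injective. Let $H_n\subset H$ be a subspace of dimension $n$ with orthogonal projection $P_n$, and let $f^\delta\in H$. Call a solution $u^*$ of $\min\{\|u\|_1:u\in\ell^1,\ P_nA^*u=P_nf^\delta\}$ a solution with minimal support if every solution $u^{**}$ with $\operatorname{supp}u^{**}\subset\operatorname{supp}u^*$ satisfies $u^{**}=u^*$. Then every solution of this problem is a finite convex combination of solutions with minimal support.
   Context: $A^*$ is defined by $\langle A^*u,z\rangle=\sum_iu_i(Az)_i$. $\operatorname{supp}u=\{i:u_i\ne0\}$. *)

(* Defs.v *)
(* R : realType, H a complete normed space whose norm
   comes from an inner product (= real Hilbert space). *)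
From HB Require Import structures.
From mathcomp Require Import all_boot all_order all_algebra.
From mathcomp Require Import all_classical all_reals all_analysis.
Set Implicit Arguments. Unset Strict Implicit. Unset Printing Implicit Defensive.
Import Order.TTheory GRing.Theory Num.Theory.
Import numFieldNormedType.Exports.
Local Open Scope classical_set_scope.
Local Open Scope ring_scope.

Section Defs.
Variables (R : realType) (H : completeNormedModType R).

Definition is_inner_product (ip : H -> H -> R) : Prop :=
  [/\ forall x y, ip x y = ip y x,
      forall a x y z, ip (a *: x + y) z = a * ip x z + ip y z
    & forall x, ip x x = `|x| ^+ 2].

Definition bounded_linear_to_c0 (A : H -> nat -> R) : Prop :=
  [/\ forall a x y k, A (a *: x + y) k = a * A x k + A y k,
      exists C : R, forall x k, `|A x k| <= C * `|x|
    & forall x, A x @ \oo --> (0 : R)].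

Definition l1 (u : nat -> R) : Prop := (\sum_(i <oo) (`|u i|)%:E < +oo)%E.

Definition norm1 (u : nat -> R) : \bar R := (\sum_(i <oo) (`|u i|)%:E)%E.

Definition is_adjoint (ip : H -> H -> R) (A : H -> nat -> R)
  (Astar : (nat -> R) -> H) : Prop :=
  forall u, l1 u -> forall z, ip (Astar u) z = \big[+%R/0]_(i <oo) (u i * A z i).

(* b is a basis of an n-dimensional subspace H_n = span b *)
Definition lin_indep (n : nat) (b : 'I_n -> H) : Prop :=
  forall c : 'I_n -> R, \sum_(i < n) c i *: b i = 0 -> forall i, c i = 0.

Definition in_span (n : nat) (b : 'I_n -> H) (x : H) : Prop :=
  exists c : 'I_n -> R, x = \sum_(i < n) c i *: b i.

Definition is_orth_proj (ip : H -> H -> R) (n : nat) (b : 'I_n -> H)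
  (P : H -> H) : Prop :=
  forall x, in_span b (P x) /\ forall i, ip (x - P x) (b i) = 0.

Definition supp (u : nat -> R) : set nat := [set i | u i != 0].

Variables (Astar : (nat -> R) -> H) (P : H -> H) (f : H).

Definition feasible (u : nat -> R) : Prop := l1 u /\ P (Astar u) = P f.

Definition l1_solution (u : nat -> R) : Prop :=
  feasible u /\ forall v, feasible v -> (norm1 u <= norm1 v)%E.

Definition minimal_support_solution (u : nat -> R) : Prop :=
  l1_solution u /\
  forall v, l1_solution v -> supp v `<=` supp u -> v = u.

End Defs.

(* Main.v *)
Require Import Defs.
From HB Require Import structures.
From mathcomp Require Import all_boot all_order all_algebra.
From mathcomp Require Import all_classical all_reals all_analysis.
From mathcomp Require Import ring lra zify.
Import Order.TTheory GRing.Theory Num.Theory.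
Import numFieldNormedType.Exports.
Local Open Scope classical_set_scope.
Local Open Scope ring_scope.
Section Aux.
Variable R : realType.

Lemma series_fin (g : nat -> R) N : (forall k, (N <= k)%N -> g k = 0) ->
  \big[+%R/0]_(i <oo) g i = \sum_(i < N) g i.
Proof.
move=> g0; apply: cvg_lim => //; apply: cvg_near_cst.
near=> n.
have Nn : (N <= n)%N by near: n; exact: nbhs_infty_ge.
rewrite [RHS](big_ord_widen _ g Nn) [RHS]big_mkcond /=; apply: eq_bigr => i _.
by case: ifP => // /negbT; rewrite -leqNgt => /g0 ->.
Unshelve. all: by end_near. Qed.

Lemma eseries_fin (g : nat -> \bar R) N : (forall k, (N <= k)%N -> g k = 0%E) ->
  (\sum_(i <oo) g i = \sum_(i < N) g i)%E.
Proof.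
move=> g0; apply: cvg_lim => //; apply: cvg_near_cst.
near=> n.
have Nn : (N <= n)%N by near: n; exact: nbhs_infty_ge.
rewrite big_mkord [RHS](big_ord_widen _ g Nn) [RHS]big_mkcond /=; apply: eq_bigr => i _.
by case: ifP => // /negbT; rewrite -leqNgt => /g0 ->.
Unshelve. all: by end_near. Qed.

Lemma norm1_fin (g : nat -> R) N : (forall k, (N <= k)%N -> g k = 0) ->
  norm1 g = (\sum_(i < N) `|g i|)%:E.
Proof.
move=> g0; rewrite /norm1 (@eseries_fin _ N) ?sumEFin // => k /g0 ->.
by rewrite normr0.
Qed.

Lemma l1_fin (g : nat -> R) N : (forall k, (N <= k)%N -> g k = 0) -> l1 g.
Proof. by move=> g0; rewrite /l1 -/(norm1 g) (@norm1_fin g N g0) ltry. Qed.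

Lemma norm1_ge0 (g : nat -> R) : (0 <= norm1 g)%E.
Proof. by apply: nneseries_ge0 => n _ _; rewrite lee_fin. Qed.

Lemma l1_partial (g : nat -> R) n : l1 g ->
  \sum_(i < n) `|g i| <= fine (norm1 g).
Proof.
move=> hg; rewrite -lee_fin fineK; last first.
  by rewrite ge0_fin_numE ?norm1_ge0.
rewrite -sumEFin -(big_mkord xpredT (fun i => (`|g i|)%:E)).
by apply: nneseries_lim_ge => k _ _; rewrite lee_fin.
Qed.

Lemma series_cvg_l1 (v a : nat -> R) (M : R) : l1 v -> (forall k, `|a k| <= M) ->
  cvgn (series (fun k => v k * a k)).
Proof.
move=> hv ha; apply: normed_cvg; apply: nondecreasing_is_cvgn.
  rewrite /normed_series_of /series /=.
  by apply: (@nondecreasing_series _ _ xpredT 0) => n _ _.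
exists (M * fine (norm1 v)) => _ [n _ <-] /=.
rewrite /normed_series_of /series /= big_mkord.
have M0 : 0 <= M by apply: le_trans (ha 0%N).
apply: (@le_trans _ _ (M * \sum_(i < n) `|v i|)).
  rewrite mulr_sumr; apply: ler_sum => i _; rewrite normrM mulrC.
  by apply: ler_wpM2r => //.
by apply: ler_wpM2l => //; exact: l1_partial.
Qed.

End Aux.
Section IP.
Variables (R : realType) (H : completeNormedModType R) (ip : H -> H -> R).
Hypothesis hip : is_inner_product ip.

Lemma ipDl x y z : ip (x + y) z = ip x z + ip y z.
Proof. by case: hip => _ hl _; have := hl 1 x y z; rewrite scale1r mul1r. Qed.

Lemma ip0l z : ip 0 z = 0.
Proof. by have := ipDl 0 0 z; rewrite addr0 => h; lra. Qed.

Lemma ipZl a x z : ip (a *: x) z = a * ip x z.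
Proof. by case: hip => _ hl _; have := hl a x 0 z; rewrite addr0 ip0l addr0. Qed.

Lemma ipNl x z : ip (- x) z = - ip x z.
Proof. by rewrite -scaleN1r ipZl mulN1r. Qed.

Lemma ipBl x y z : ip (x - y) z = ip x z - ip y z.
Proof. by rewrite ipDl ipNl. Qed.

Lemma ip_suml n (c : 'I_n -> R) (b : 'I_n -> H) z :
  ip (\sum_(i < n) c i *: b i) z = \sum_(i < n) c i * ip (b i) z.
Proof.
elim/big_rec2: _ => [|i y1 y2 _ IH]; first exact: ip0l.
by rewrite ipDl ipZl IH.
Qed.

Lemma ip_self0 x : ip x x = 0 -> x = 0.
Proof.
case: hip => _ _ hn; rewrite hn => /eqP; rewrite sqrf_eq0 normr_eq0.
by move/eqP.
Qed.

Lemma ipP n (b : 'I_n -> H) (P : H -> H) x i : is_orth_proj ip b P ->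
  ip (P x) (b i) = ip x (b i).
Proof. by move=> hP; have [_ /(_ i)] := hP x; rewrite ipBl => h; lra. Qed.

Lemma proj_eq n (b : 'I_n -> H) (P : H -> H) x y : is_orth_proj ip b P ->
  (P x = P y <-> forall i, ip x (b i) = ip y (b i)).
Proof.
move=> hP; split.
  by move=> e i; rewrite -(@ipP _ b P x i hP) -(@ipP _ b P y i hP) e.
move=> e; apply/eqP; rewrite -subr_eq0; apply/eqP; apply: ip_self0.
have hd i : ip (P x - P y) (b i) = 0.
  by rewrite ipBl (@ipP _ b P x i hP) (@ipP _ b P y i hP) e subrr.
have [[cx hx] _] := hP x; have [[cy hy] _] := hP y.
rewrite {1}(_ : P x - P y = \sum_(i < n) (cx i - cy i) *: b i); last first.
  by rewrite hx hy -sumrB; apply: eq_bigr => i _; rewrite scalerBl.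
rewrite ip_suml big1 // => i _.
case: hip => hs _ _.
by rewrite hs hd mulr0.
Qed.

End IP.
Section LA.
Variables (R : realType) (n : nat) (a : 'I_n -> nat -> R).
Definition Bm m : 'M[R]_(m, n) := \matrix_(j < m, i < n) a i j.
Definition al k : 'rV[R]_n := \row_(i < n) a i k.

Lemma Bm_mono m m' : (m <= m')%N -> (Bm m <= Bm m')%MS.
Proof.
move=> h; apply/row_subP => i.
rewrite (_ : row i _ = row (widen_ord h i) (Bm m')) ?row_sub //.
by apply/rowP => j; rewrite !mxE.
Qed.

Lemma al_sub k : (al k <= Bm k.+1)%MS.
Proof.
rewrite (_ : al k = row (Ordinal (ltnSn k)) (Bm k.+1)) ?row_sub //.
by apply/rowP => j; rewrite !mxE.
Qed.

Lemma max_nat (r : nat -> nat) B : (forall m, (r m <= B)%N) ->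
  exists m0, forall m, (r m <= r m0)%N.
Proof.
move=> hB.
suff : forall k m, (B - r m <= k)%N -> exists m0, forall m, (r m <= r m0)%N.
  by move/(_ B 0%N); apply; rewrite leq_subr.
elim=> [|k IH] m hk.
  exists m => m'; have := hB m'; move: hk; rewrite leqn0 subn_eq0 => h1 h2.
  exact: leq_trans h2 h1.
have [h|h] := pselect (forall m', (r m' <= r m)%N); first by exists m.
move/existsNP: h => [m' /negP]; rewrite -ltnNge => lt.
apply: (IH m'); have := hB m'; have := hB m; lia.
Qed.

Lemma stab : exists N0, forall k, (al k <= Bm N0)%MS.
Proof.
have [m0 hm0] := @max_nat (fun m => \rank (Bm m)) n (fun m => rank_leq_col _).
exists m0 => k.
set m := maxn m0 k.+1.
have s1 : (Bm m0 <= Bm m)%MS by apply: Bm_mono; exact: leq_maxl.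
have s2 : (Bm m <= Bm m0)%MS.
  have := mxrank_leqif_sup s1; case => _ <-.
  by rewrite eqn_leq hm0 mxrankS.
apply: submx_trans s2; apply: submx_trans (al_sub k) _.
by apply: Bm_mono; exact: leq_maxr.
Qed.

Lemma decomp : exists N0 (Q : 'I_n -> 'I_N0 -> R),
  forall k i, \sum_(j < N0) (\sum_(l < n) a l k * Q l j) * a i j = a i k.
Proof.
have [N0 hN0] := stab.
exists N0, (fun l j => pinvmx (Bm N0) l j) => k i.
have := mulmxKpV (hN0 k) => /(congr1 (fun M : 'rV[R]_n => M 0 i)).
rewrite !mxE => <-; apply: eq_bigr => j _; rewrite !mxE; congr (_ * _).
by apply: eq_bigr => l _; rewrite !mxE.
Qed.

Lemma decomp_nat : exists N0 (Q : 'I_n -> nat -> R),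
  forall k i, \sum_(j < N0) (\sum_(l < n) a l k * Q l j) * a i j = a i k.
Proof.
have [N0 hN0] := stab.
have hN1 k : (al k <= Bm N0.+1)%MS.
  by apply: submx_trans (hN0 k) _; apply: Bm_mono.
exists N0.+1, (fun l j => pinvmx (Bm N0.+1) l (inord j)) => k i.
have := mulmxKpV (hN1 k) => /(congr1 (fun M : 'rV[R]_n => M 0 i)).
rewrite !mxE => <-; apply: eq_bigr => j _; rewrite !mxE inord_val; congr (_ * _).
by apply: eq_bigr => l _; rewrite !mxE.
Qed.
End LA.
Section MinMax.
Variable R : realType.
Lemma exists_min (N : nat) (P : pred 'I_N) (F : 'I_N -> R) :
  (exists i, P i) -> exists2 i, P i & forall j, P j -> F i <= F j.
Proof.
case=> i0 Pi0.
case: (@arg_minP _ _ _ i0 P F Pi0) => i Pi h.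
by exists i.
Qed.
Lemma exists_max (N : nat) (P : pred 'I_N) (F : 'I_N -> R) :
  (exists i, P i) -> exists2 i, P i & forall j, P j -> F j <= F i.
Proof.
case=> i0 Pi0.
case: (@arg_maxP _ _ _ i0 P F Pi0) => i Pi h.
by exists i.
Qed.
End MinMax.
Section RealAux.
Variable R : realType.
Implicit Types x y : R.

Lemma normcase x : (0 <= x /\ `|x| = x) \/ (x < 0 /\ `|x| = - x).
Proof.
have [h|h] := leP 0 x; [left; split=> //; exact: ger0_norm|right].
by split=> //; exact: ltr0_norm.
Qed.

Lemma sgcase x : [\/ 0 < x /\ Num.sg x = 1, x < 0 /\ Num.sg x = -1
  | x = 0 /\ Num.sg x = 0].
Proof.
case: (ltrgtP x 0) => h.
- by apply: Or32; split=> //; exact: ltr0_sg.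
- by apply: Or31; split=> //; exact: gtr0_sg.
- by apply: Or33; rewrite h sgr0.
Qed.

Lemma sg_lem x y : `|x + y| = `|x| + `|y| -> (x = 0 -> y = 0) ->
  Num.sg x * y = `|y|.
Proof.
move=> h h0.
case: (sgcase x) => -[hx ->].
- case: (normcase x) => -[? e1]; rewrite e1 in h; try lra.
  case: (normcase y) => -[? e2]; rewrite e2 in h *; try lra.
  case: (normcase (x + y)) => -[? e3]; rewrite e3 in h; lra.
- case: (normcase x) => -[? e1]; rewrite e1 in h; try lra.
  case: (normcase y) => -[? e2]; rewrite e2 in h *; try lra.
  case: (normcase (x + y)) => -[? e3]; rewrite e3 in h; lra.
- by rewrite (h0 hx) mul0r normr0.
Qed.

Lemma sg_norm x : Num.sg x * x = `|x|.
Proof. by rewrite normrEsg. Qed.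

Lemma sg_abs x z : x != 0 -> 0 <= Num.sg x * z -> `|z| = Num.sg x * z.
Proof.
move=> /eqP x0 h; case: (sgcase x) => -[hx e]; rewrite e in h *; try lra.
- by rewrite mul1r ger0_norm //; lra.
- by rewrite ler0_norm; lra.
Qed.

Lemma split_l m1 m2 (i : 'I_m1) : fintype.split (lshift m2 i) = inl i.
Proof. exact: (unsplitK (inl i)). Qed.
Lemma split_r m1 m2 (i : 'I_m2) : fintype.split (rshift m1 i) = inr i.
Proof. exact: (unsplitK (inr i)). Qed.

Definition conv_of (Sol : (nat -> R) -> Prop) (g : nat -> R) :=
  exists (m : nat) (lam : 'I_m -> R) (w : 'I_m -> nat -> R),
    [/\ forall j, 0 <= lam j,
        \sum_(j < m) lam j = 1,
        forall j, Sol (w j)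
      & g = fun k => \sum_(j < m) lam j * w j k].

Lemma conv_one Sol g : Sol g -> conv_of Sol g.
Proof.
move=> hg; exists 1%N, (fun _ => 1), (fun _ => g); split.
- by move=> _; exact: ler01.
- by rewrite big_ord1.
- by [].
- by apply/funext => k; rewrite big_ord1 mul1r.
Qed.

Lemma conv_comb Sol (x y g : nat -> R) (l : R) : 0 <= l <= 1 ->
  (forall k, g k = l * x k + (1 - l) * y k) ->
  conv_of Sol x -> conv_of Sol y -> conv_of Sol g.
Proof.
move=> /andP[l0 l1] hg [m1 [lam1 [w1 [h11 h12 h13 h14]]]]
  [m2 [lam2 [w2 [h21 h22 h23 h24]]]].
exists (m1 + m2)%N,
  (fun j => match fintype.split j with inl i => l * lam1 i | inr i => (1 - l) * lam2 i end),
  (fun j => match fintype.split j with inl i => w1 i | inr i => w2 i end).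
split.
- move=> j; case: (fintype.split j) => i.
    by apply: mulr_ge0.
  by apply: mulr_ge0 => //; lra.
- rewrite big_split_ord /=.
  rewrite (eq_bigr (fun i => l * lam1 i)); last by move=> i _; rewrite split_l.
  rewrite (eq_bigr (fun i => (1 - l) * lam2 i)); last by move=> i _; rewrite split_r.
  by rewrite -!mulr_sumr h12 h22; lra.
- by move=> j; case: (fintype.split j).
- apply/funext => k; rewrite hg big_split_ord /=.
  rewrite (eq_bigr (fun i => l * lam1 i * w1 i k)); last by move=> i _; rewrite split_l.
  rewrite (eq_bigr (fun i => (1 - l) * lam2 i * w2 i k)); last by move=> i _; rewrite split_r.
  by rewrite h14 h24 !mulr_sumr; congr (_ + _); apply: eq_bigr => i _; rewrite mulrA.
Qed.
Lemma sgn_aux (S r W : R) : S * r = - W -> 0 < W ->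
  (0 < r -> S < 0) /\ (r < 0 -> 0 < S).
Proof.
move=> h W0; split=> hr.
  by rewrite ltNge; apply/negP => S0; nra.
by rewrite ltNge; apply/negP => S0; nra.
Qed.

Lemma adm_aux (S r W t : R) : S * r = - W -> 0 < W ->
  (0 < r /\ t <= r) \/ (r < 0 /\ r <= t) -> 0 <= W + t * S.
Proof.
move=> h W0 [[r0 tr]|[r0 tr]].
  have S0 := (sgn_aux _ _ _ h W0).1 r0; nra.
have S0 := (sgn_aux _ _ _ h W0).2 r0; nra.
Qed.
End RealAux.
Section Main.
Variables (R : realType) (H : completeNormedModType R) (ip : H -> H -> R)
  (A : H -> nat -> R) (Astar : (nat -> R) -> H) (n : nat) (b : 'I_n -> H)
  (P : H -> H) (f : H).
Hypotheses (hip : is_inner_product ip) (hA : bounded_linear_to_c0 A)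
  (hadj : is_adjoint ip A Astar) (hP : is_orth_proj ip b P).

Lemma feasE v : feasible Astar P f v <->
  l1 v /\ forall i, ip (Astar v) (b i) = ip f (b i).
Proof.
split=> -[h1 h2]; split=> //.
  by apply/(@proj_eq _ _ ip hip _ b P _ _ hP).
by apply/(@proj_eq _ _ ip hip _ b P _ _ hP).
Qed.

Lemma limn_series_ord (g : nat -> R) :
  limn (series g) = \big[+%R/0]_(i <oo) g i.
Proof. by rewrite /series /=; under eq_fun do rewrite big_mkord. Qed.

Lemma adjE v z : l1 v -> ip (Astar v) z = limn (series (fun k => v k * A z k)).
Proof. by move=> hv; rewrite hadj // limn_series_ord. Qed.

Lemma Abound : exists C : R, forall z k, `|A z k| <= C * `|z|.
Proof. by case: hA => _ [C hC] _; exists C. Qed.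

Lemma perturb u (d : nat -> R) M : l1 u -> (forall k, (M <= k)%N -> d k = 0) ->
  l1 (fun k => u k + d k) /\ forall z, ip (Astar (fun k => u k + d k)) z =
     ip (Astar u) z + \sum_(k < M) d k * A z k.
Proof.
move=> hu hd.
have hl : l1 (fun k => u k + d k).
  rewrite /l1; apply: (@le_lt_trans _ _ (norm1 u + norm1 d)%E).
    rewrite /norm1 -nneseriesD; last 2 first.
    - by move=> *; rewrite lee_fin.
    - by move=> *; rewrite lee_fin.
    apply: lee_nneseries => [k _ _|k _]; first by rewrite lee_fin.
    by rewrite -EFinD lee_fin ler_normD.
  apply: lte_add_pinfty; first exact: hu.
  exact: (@l1_fin _ d M hd).
split=> // z.
have [C hC] := Abound.
rewrite !adjE //.
rewrite (_ : (fun k => (u k + d k) * A z k) =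
   (fun k => u k * A z k) + (fun k => d k * A z k)); last first.
  by apply/funext => k /=; rewrite mulrDl.
rewrite lim_seriesD; first last.
- exact: (@series_cvg_l1 _ d (A z) (C * `|z|) (@l1_fin _ d M hd)).
- exact: (@series_cvg_l1 _ u (A z) (C * `|z|) hu).
congr (_ + _); rewrite limn_series_ord (@series_fin _ (fun k => d k * A z k) M) // => k /hd ->.
by rewrite mul0r.
Qed.

Lemma small_mu N0 (Q : 'I_n -> nat -> R) : exists N1, forall k, (N1 <= k)%N ->
  \sum_(j < N0) `|\sum_(l < n) A (b l) k * Q l j| < 1.
Proof.
set S := \sum_(j < N0) \sum_(l < n) `|Q l j|.
have S0 : 0 <= S by apply: sumr_ge0 => j _; apply: sumr_ge0.
set eps := (1 + S)^-1.
have eps0 : 0 < eps by rewrite invr_gt0; lra.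
have : \forall k \near \oo, forall l, `|A (b l) k| < eps.
  apply: filter_forall => l; apply: cvgr0_norm_lt => //.
  by case: hA => _ _; apply.
case=> N1 _ hN1; exists N1 => k /hN1 hk.
apply: (@le_lt_trans _ _ (eps * S)).
  rewrite /S mulr_sumr; apply: ler_sum => j _.
  apply: (le_trans (ler_norm_sum _ _ _)); rewrite mulr_sumr; apply: ler_sum => l _.
  rewrite normrM; apply: ler_wpM2r => //; exact: ltW.
rewrite /eps; rewrite mulrC -(@ltr_pM2r _ (1 + S)) ?mul1r; last lra.
by rewrite -mulrA mulVf ?mulr1; [lra| apply/eqP; lra].
Qed.

Lemma sol_supp : exists N, forall u, l1_solution Astar P f u ->
  forall k, (N <= k)%N -> u k = 0.
Proof.
have [N0 [Q hQ]] := @decomp_nat R n (fun l k => A (b l) k).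
have [N1 hN1] := small_mu N0 Q.
exists (maxn N0 N1) => u [hfu hmin] k hk.
have hN0k : (N0 <= k)%N by apply: leq_trans hk; exact: leq_maxl.
have hsm := hN1 k (leq_trans (leq_maxr _ _) hk).
apply/eqP; apply/negPn/negP => uk0.
set mu := fun j : nat => \sum_(l < n) A (b l) k * Q l j.
set d := fun j : nat => if j == k then - u k else
                        if (j < N0)%N then u k * mu j else 0.
have hd : forall j, (k.+1 <= j)%N -> d j = 0.
  move=> j hj; rewrite /d ifF; last by apply/negbTE; rewrite neq_ltn; apply/orP; right.
  by rewrite ifF //; apply/negbTE; rewrite -leqNgt; lia.
have [hfu1 hfu2] := (feasE u).1 hfu.
have [hl hip'] := @perturb u d k.+1 hfu1 hd.
set v := (fun k0 => u k0 + d k0) in hl hip'.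
have hsum i : \sum_(j < k.+1) d j * A (b i) j = 0.
  rewrite big_ord_recr /= /d eqxx.
  rewrite (eq_bigr (fun j : 'I_k => (if (j < N0)%N then u k * mu j else 0) * A (b i) j));
    last by move=> j _; rewrite ifF //; apply/negbTE; rewrite neq_ltn ltn_ord.
  rewrite (eq_bigr (fun j : 'I_k => if (j < N0)%N then u k * mu j * A (b i) j else 0));
    last by move=> j _; case: ifP => _ //; rewrite mul0r.
  rewrite -big_mkcond /= -(big_ord_widen _ (fun j => u k * mu j * A (b i) j) hN0k).
  under eq_bigr do rewrite -mulrA.
  by rewrite -mulr_sumr hQ; lra.
have hfv : feasible Astar P f v.
  apply/feasE; split=> // i; rewrite hip' hsum addr0; exact: hfu2.
have := hmin v hfv; apply/negP; rewrite -ltNge.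
have ge0 (g : nat -> R) : forall i, (0 <= i)%N -> (0%E <= (`|g i|)%:E)%E.
  by move=> *; rewrite lee_fin.
have eV := @nneseries_split R (fun i => (`|v i|)%:E) 0 k.+1 (ge0 v).
have eU := @nneseries_split R (fun i => (`|u i|)%:E) 0 k.+1 (ge0 u).
have tails : (\sum_(0 + k.+1 <= i <oo) (`|v i|)%:E = \sum_(0 + k.+1 <= i <oo) (`|u i|)%:E)%E.
  apply: congr_lim; apply/funext => m; apply: eq_big_nat => j /andP[hj _].
  by rewrite /v hd ?addr0 //; rewrite add0n in hj.
have fV : (\sum_(0 <= i < 0 + k.+1) (`|v i|)%:E = (\sum_(i < k.+1) `|v i|)%:E)%E.
  by rewrite sumEFin add0n big_mkord.
have fU : (\sum_(0 <= i < 0 + k.+1) (`|u i|)%:E = (\sum_(i < k.+1) `|u i|)%:E)%E.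
  by rewrite sumEFin add0n big_mkord.
rewrite /norm1 eV eU tails fV fU.
have Tfin : (\sum_(0 + k.+1 <= i <oo) (`|u i|)%:E)%E \is a fin_num.
  rewrite ge0_fin_numE; last by apply: nneseries_ge0 => *; rewrite lee_fin.
  apply: (@le_lt_trans _ _ (norm1 u)); last exact: hfu1.
  by rewrite /norm1 eU fU leeDr // lee_fin; apply: sumr_ge0 => *.
rewrite lteD2rE // lte_fin.
have hdk : v k = 0 by rewrite /v /d eqxx addrN.
have hD : \sum_(j < k) `|d j| = `|u k| * \sum_(j < N0) `|mu j|.
  rewrite (eq_bigr (fun j : 'I_k => if (j < N0)%N then `|u k| * `|mu j| else 0)); last first.
    move=> j _; rewrite /d ifF; last by apply/negbTE; rewrite neq_ltn ltn_ord.
    by case: ifP => _; [rewrite normrM | rewrite normr0].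
  by rewrite -big_mkcond /= -(big_ord_widen _ (fun j => `|u k| * `|mu j|) hN0k) -mulr_sumr.
have hle : \sum_(j < k) `|v j| <= \sum_(j < k) `|u j| + \sum_(j < k) `|d j|.
  by rewrite -big_split; apply: ler_sum => j _; apply: ler_normD.
have uk : 0 < `|u k| by rewrite normr_gt0.
have hm : `|u k| * \sum_(j < N0) `|mu j| < `|u k| by nra.
rewrite !big_ord_recr /= hdk normr0 addr0.
lra.
Qed.
Section Fin.
Variable N : nat.
Hypothesis hN : forall u, l1_solution Astar P f u -> forall k, (N <= k)%N -> u k = 0.

Lemma ip_fs w z : (forall k, (N <= k)%N -> w k = 0) ->
  ip (Astar w) z = \sum_(k < N) w k * A z k.
Proof.
move=> hw; rewrite adjE; last exact: (@l1_fin _ w N hw).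
rewrite limn_series_ord (@series_fin _ (fun k => w k * A z k) N) // => k /hw ->.
by rewrite mul0r.
Qed.

Lemma line_fs w v t : l1_solution Astar P f w -> l1_solution Astar P f v ->
  forall k, (N <= k)%N -> w k + t * (v k - w k) = 0.
Proof. by move=> hw hv k hk; rewrite (hN _ hw _ hk) (hN _ hv _ hk); lra. Qed.

Lemma feas_line w v t : l1_solution Astar P f w -> l1_solution Astar P f v ->
  feasible Astar P f (fun k => w k + t * (v k - w k)).
Proof.
move=> hw hv; have fz := line_fs w v t hw hv.
apply/feasE; split; first exact: (@l1_fin _ _ N fz).
move=> i; rewrite (ip_fs _ (b i) fz).
have [_ hw2] := (feasE w).1 hw.1; have [_ hv2] := (feasE v).1 hv.1.
have := hw2 i; rewrite (ip_fs _ _ (hN _ hw)) => {}hw2.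
have := hv2 i; rewrite (ip_fs _ _ (hN _ hv)) => {}hv2.
have -> : \sum_(k < N) (w k + t * (v k - w k)) * A (b i) k =
  \sum_(k < N) w k * A (b i) k + t * (\sum_(k < N) v k * A (b i) k -
     \sum_(k < N) w k * A (b i) k).
  rewrite -sumrB mulr_sumr -big_split; by apply: eq_bigr => k _ /=; ring.
by rewrite hw2 hv2; ring.
Qed.

Lemma sol_of w u : l1_solution Astar P f u -> feasible Astar P f w ->
  (forall k, (N <= k)%N -> w k = 0) ->
  \sum_(k < N) `|w k| <= \sum_(k < N) `|u k| -> l1_solution Astar P f w.
Proof.
move=> hu hw fw hle; split => // v hv.
apply: le_trans (hu.2 v hv).
by rewrite (@norm1_fin _ w N fw) (@norm1_fin _ u N (hN _ hu)) lee_fin.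
Qed.

Lemma sol_norm_eq u v : l1_solution Astar P f u -> l1_solution Astar P f v ->
  \sum_(k < N) `|u k| = \sum_(k < N) `|v k|.
Proof.
move=> hu hv; have h1 := hu.2 v hv.1; have h2 := hv.2 u hu.1.
rewrite (@norm1_fin _ u N (hN _ hu)) (@norm1_fin _ v N (hN _ hv)) lee_fin in h1 h2.
by rewrite lee_fin in h2; apply/eqP; rewrite eq_le; apply/andP; split.
Qed.

Lemma sign_cons u v : l1_solution Astar P f u -> l1_solution Astar P f v ->
  forall k : 'I_N, `|u k + v k| = `|u k| + `|v k|.
Proof.
move=> hu hv.
have hz := hu.2 _ (feas_line u v 2^-1 hu hv).
rewrite (@norm1_fin _ u N (hN _ hu)) (@norm1_fin _ _ N (line_fs u v 2^-1 hu hv)) lee_fin in hz.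
have e : forall k : 'I_N, `|u k + 2^-1 * (v k - u k)| = 2^-1 * `|u k + v k|.
  move=> k; rewrite (_ : u k + 2^-1 * (v k - u k) = 2^-1 * (u k + v k)); last by field.
  by rewrite normrM ger0_norm // invr_ge0.
rewrite [X in _ <= X](eq_bigr (fun k : 'I_N => 2^-1 * `|u k + v k|)) in hz; last by move=> k _; exact: e k.
rewrite -mulr_sumr in hz.
have ne := sol_norm_eq _ _ hu hv.
have nn : forall k : 'I_N, true -> 0 <= `|u k| + `|v k| - `|u k + v k|.
  by move=> k _; rewrite subr_ge0 ler_normD.
have hs : \sum_(k < N) (`|u k| + `|v k| - `|u k + v k|) = 0.
  apply/eqP; rewrite eq_le; apply/andP; split; last exact: sumr_ge0.
  rewrite sumrB big_split /=; lra.
move=> k; have := psumr_eq0P nn hs => /(_ k isT).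
by lra.
Qed.

Lemma conv_min (s : nat) : forall w, l1_solution Astar P f w ->
  (#|[pred k : 'I_N | w k != 0%R]| < s)%N ->
  @conv_of R (minimal_support_solution Astar P f) w.
Proof.
elim: s => [//|s IH] w hw hc.
have [hms|hnm] := pselect (minimal_support_solution Astar P f w).
  exact: conv_one.
have : ~ (forall v, l1_solution Astar P f v -> supp v `<=` supp w -> v = w).
  by move=> h; apply: hnm; split.
move/existsNP => [v /not_implyP [hv /not_implyP [hsub hne]]].
have fw := hN _ hw; have fv := hN _ hv.
have w0v0 k : w k = 0 -> v k = 0.
  move=> wk; apply/eqP; apply/negP => /negP vk.
  by have := hsub k vk; rewrite /supp /= wk eqxx.
set d := fun k => v k - w k.
have hd0 k : w k = 0 -> d k = 0 by move=> wk; rewrite /d wk (w0v0 k wk) subr0.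
have [k0 hk0] : exists k : 'I_N, d k != 0.
  apply: contrapT => /forallNP hall; apply: hne; apply/funext => k.
  have [hk|hk] := ltnP k N.
    by move/negP: (hall (Ordinal hk)); rewrite negbK /d /= subr_eq0 => /eqP.
  by rewrite (fw _ hk) (fv _ hk).
set sg := fun k => Num.sg (w k).
have sv (k : 'I_N) : sg k * v k = `|v k|.
  by apply: sg_lem; [exact: sign_cons | exact: w0v0].
have sw k : sg k * w k = `|w k| by rewrite /sg sg_norm.
have nv := sol_norm_eq _ _ hw hv.
have F4 : \sum_(k < N) sg k * d k = 0.
  rewrite (eq_bigr (fun k : 'I_N => `|v k| - `|w k|)); last first.
    by move=> k _; rewrite /d mulrBr sv sw.
  by rewrite sumrB nv subrr.
set r := fun k => - w k / d k.
have key k : d k != 0 -> sg k * d k * r k = - `|w k|.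
  move=> dk; rewrite /r -(sw k); field; exact: dk.
have wne k : d k != 0 -> w k != 0.
  by move=> dk; apply/eqP => wk; move: dk; rewrite hd0 // eqxx.
have wpos k : d k != 0 -> 0 < `|w k| by move=> /wne; rewrite normr_gt0.
have rne k : d k != 0 -> r k != 0.
  move=> dk; apply/eqP => rk; have := key k dk; rewrite rk mulr0.
  by have := wpos k dk; lra.
set Kp := [pred k : 'I_N | (d k != 0) && (0 < r k)].
set Km := [pred k : 'I_N | (d k != 0) && (r k < 0)].
have sgd_ge0 (pos : bool) : (forall k, ~ (if pos then Kp k else Km k)) ->
    forall k : 'I_N, true -> 0 <= (if pos then sg k * d k else - (sg k * d k)).
  move=> hno k _; have [dk|dk] := eqVneq (d k) 0.
    by rewrite dk mulr0; clear hno; case: pos => //; rewrite oppr0.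
  have := hno k; rewrite /Kp /Km /= dk /=.
  have := @sgn_aux R _ _ _ (key k dk) (wpos k dk).
  have := rne k dk; clear hno; case: pos => /= rk [h1 h2] hn.
    have : r k < 0 by rewrite lt_neqAle rk /= leNgt; apply/negP.
    by move/h2 => ?; lra.
  have : 0 < r k by rewrite lt_neqAle eq_sym rk /= leNgt; apply/negP.
  by move/h1 => ?; lra.
have exK (pos : bool) : exists k, if pos then Kp k else Km k.
  apply: contrapT => /forallNP hno.
  have := psumr_eq0P (sgd_ge0 pos hno).
  have hs : \sum_(k < N) (if pos then sg k * d k else - (sg k * d k)) = 0.
    by clear hno; case: pos; rewrite ?sumrN F4 ?oppr0.
  move=> /(_ hs k0 isT).
  have := key k0 hk0; have := wpos k0 hk0.
  clear hno hs; move=> h1 h2 h3.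
  have e0 : sg k0 * d k0 = 0.
    by move: h3; case: pos => //= /eqP; rewrite oppr_eq0 => /eqP.
  by rewrite e0 mul0r in h2; move: h1; rewrite -oppr_lt0 -h2 ltxx.
have [kp Kpkp minp] := @exists_min R N Kp (fun k => r k) (exK true).
have [km Kmkm maxm] := @exists_max R N Km (fun k => r k) (exK false).
set tp := r kp; set tm := r km.
have tp0 : 0 < tp by case/andP: Kpkp.
have tm0 : tm < 0 by case/andP: Kmkm.
set z := fun t k => w k + t * (v k - w k).
have zsol t : tm <= t <= tp -> l1_solution Astar P f (z t).
  move=> /andP[h1 h2].
  apply: (@sol_of (z t) w hw (feas_line w v t hw hv) (line_fs w v t hw hv)).
  have e : \sum_(k < N) sg k * z t k = \sum_(k < N) `|w k|.
    rewrite /z (eq_bigr (fun k : 'I_N => sg k * w k + t * (sg k * d k))); last first.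
      by move=> k _; rewrite /d; ring.
    by rewrite big_split /= -mulr_sumr F4 mulr0 addr0; apply: eq_bigr => k _; rewrite sw.
  rewrite -e; apply: ler_sum => k _; rewrite /z.
  have [dk|dk] := eqVneq (d k) 0.
    rewrite (_ : v k - w k = 0) ?mulr0 ?addr0; last exact: dk.
    by rewrite sw.
  have hz0 : 0 <= sg k * (w k + t * (v k - w k)).
    rewrite mulrDr sw mulrCA.
    apply: (@adm_aux R (sg k * d k) (r k) (`|w k|) t (key k dk) (wpos k dk)).
    have := rne k dk; rewrite neq_lt => /orP[rk|rk].
      right; split => //; apply: le_trans h1; apply: maxm.
      by rewrite /Km /= dk rk.
    left; split => //; apply: le_trans h2 _; apply: minp.
    by rewrite /Kp /= dk rk.
  by rewrite (@sg_abs R _ _ (wne k dk) hz0).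
have zk t k : d k != 0 -> t = r k -> z t k = 0.
  by move=> dk ->; rewrite /z /r /d; field; exact: dk.
have cnt t (k' : 'I_N) : d k' != 0 -> t = r k' ->
    (#|[pred k : 'I_N | z t k != 0%R]| < #|[pred k : 'I_N | w k != 0%R]|)%N.
  move=> dk' et; apply: proper_card; apply/fintype.properP; split.
    apply/fintype.subsetP => k; rewrite !inE; apply: contraNN => /eqP wk.
    by rewrite /z wk (w0v0 k wk) subrr mulr0 addr0.
  exists k'; rewrite !inE ?wne //; have := zk t k' dk' et; rewrite /z => ->; by rewrite eqxx.
have dpm : 0 < tp - tm by rewrite subr_gt0; apply: lt_trans tp0.
have convz t (k' : 'I_N) : d k' != 0 -> t = r k' -> tm <= t <= tp ->
    @conv_of R (minimal_support_solution Astar P f) (z t).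
  move=> dk' et ht; apply: IH; first exact: zsol.
  by apply: leq_trans (cnt t k' dk' et) _; rewrite -ltnS.
have hkp : d kp != 0 by case/andP: Kpkp.
have hkm : d km != 0 by case/andP: Kmkm.
apply: (@conv_comb R _ (z tm) (z tp) w (tp / (tp - tm))).
- apply/andP; split; first by apply: divr_ge0; [exact: ltW | exact: ltW].
  by rewrite ler_pdivrMr // mul1r lerDl oppr_ge0; exact: ltW.
- move=> k; rewrite /z; field.
  by rewrite subr_eq0; apply/eqP => e; move: dpm; rewrite e subrr ltxx.
- apply: (convz tm km hkm erefl); apply/andP; split => //.
  by apply: le_trans (ltW tm0) (ltW tp0).
- apply: (convz tp kp hkp erefl); apply/andP; split => //.
  by apply: le_trans (ltW tm0) (ltW tp0).
Qed.
End Fin.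
End Main.

Theorem lemma5 (R : realType) (H : completeNormedModType R)
  (ip : H -> H -> R) (A : H -> nat -> R) (Astar : (nat -> R) -> H)
  (n : nat) (b : 'I_n -> H) (P : H -> H) (f : H) :
  is_inner_product ip ->
  bounded_linear_to_c0 A ->
  is_adjoint ip A Astar ->
  (forall x y, A x = A y -> x = y) ->
  (forall u v, l1 u -> l1 v -> Astar u = Astar v -> u = v) ->
  lin_indep b ->
  is_orth_proj ip b P ->
  forall u, l1_solution Astar P f u ->
  exists (m : nat) (lam : 'I_m -> R) (w : 'I_m -> nat -> R),
    [/\ forall j, 0 <= lam j,
        \sum_(j < m) lam j = 1,
        forall j, minimal_support_solution Astar P f (w j)
      & u = fun k => \sum_(j < m) lam j * w j k].
Proof.
move=> hip hA hadj _ _ _ hP u hu.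
have [N hN] := @sol_supp R H ip A Astar n b P f hip hA hadj hP.
have := @conv_min R H ip A Astar n b P f hip hadj hP N hN _ u hu (ltnSn _).
by case=> m [lam [w hw]]; exists m, lam, w.
Qed.
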